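(* Let $\Re(p)>0$ and $\Re(\mu)>\Re(\eta)>0$. Then $$\mathfrak{D}_{z}^{\eta-\mu}\left\{z^{\eta-1}\,{}_m\Psi_n\!\left[\begin{array}{c}(\alpha_i,A_i)_{1,m}\\(\beta_j,B_j)_{1,n}\end{array}\Big|\,z\right];p\right\}=z^{\mu-1}\,{}_{m+1}\Psi_{n+1}\!\left[\begin{array}{c}(\alpha_i,A_i)_{1,m},(\eta,1)\\(\beta_j,B_j)_{1,n},(\mu,1)\end{array}\Big|\,(z;p)\right].$$
   Context: For $\Re(\nu)<0$, $\mathfrak{D}_{z}^{\nu}\{f(z);p\}=\frac{1}{\Gamma(-\nu)}\int_0^z f(t)(z-t)^{-\nu-1}\exp\!\left(-\frac{pz^2}{t(z-t)}\right)dt$. $B_p(a,b)=\int_0^1 t^{a-1}(1-t)^{b-1}e^{-\frac{p}{t(1-t)}}dt$. The Fox–Wright function is ${}_m\Psi_n\!\left[\begin{array}{c}(\alpha_i,A_i)_{1,m}\\(\beta_j,B_j)_{1,n}\end{array}\Big|\,z\right]=\sum_{k=0}^\infty\frac{\prod_{i=1}^{m}\Gamma(\alpha_i+A_ik)}{\prod_{j=1}^{n}\Gamma(\beta_j+B_jk)}\frac{z^k}{k!}$, and the extended Wright function is ${}_{m+1}\Psi_{n+1}\!\left[\begin{array}{c}(\alpha_i,A_i)_{1,m},(\gamma,1)\\(\beta_j,B_j)_{1,n},(c,1)\end{array}\Big|\,(z;p)\right]=\frac{1}{\Gamma(c-\gamma)}\sum_{k=0}^\infty\frac{\prod_{i=1}^{m}\Gamma(\alpha_i+A_ik)}{\prod_{j=1}^{n}\Gamma(\beta_j+B_jk)}\frac{B_p(\gamma+k,c-\gamma)z^k}{k!}$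 for $\Re(c)>\Re(\gamma)>0$. *)

(* Defs.v *)
From Stdlib Require Import Reals Factorial.
From Coquelicot Require Import Coquelicot.
Open Scope R_scope.

(** Principal argument in (-PI, PI], with Carg 0 = 0. *)
Definition Carg (z : C) : R :=
  let x := fst z in let y := snd z in
  if Rlt_dec 0 x then atan (y / x)
  else if Rlt_dec x 0 then
    (if Rle_dec 0 y then atan (y / x) + PI else atan (y / x) - PI)
  else (if Rlt_dec 0 y then PI / 2 else if Rlt_dec y 0 then - (PI / 2) else 0).

Definition Cexp (z : C) : C :=
  (exp (fst z) * cos (snd z), exp (fst z) * sin (snd z)).
Definition Clog (z : C) : C := (ln (Cmod z), Carg z).

(** Principal complex power  z^s = exp (s Log z)  (convention 0^s = 0). *)
Definition Cpowc (z s : C) : C :=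
  if Req_EM_T (Cmod z) 0 then RtoC 0 else Cexp (Cmult s (Clog z)).

Definition Clim_seq (u : nat -> C) : C :=
  (real (Lim_seq (fun k => fst (u k))), real (Lim_seq (fun k => snd (u k)))).
Definition Cseries (a : nat -> C) : C :=
  (Series (fun k => fst (a k)), Series (fun k => snd (a k))).
Definition CRInt (f : R -> C) (a b : R) : C :=
  (RInt (fun t => fst (f t)) a b, RInt (fun t => snd (f t)) a b).

Fixpoint Cprod (f : nat -> C) (n : nat) : C :=
  match n with
  | O => RtoC 1
  | S n' => Cmult (Cprod f n') (f n')
  end.

(** Euler's Gamma function (Gauss' limit formula):
    Gamma(s) = lim_{N->oo} N! N^s / (s (s+1) ... (s+N)). *)
Definition CGamma (s : C) : C :=
  Clim_seq (fun N => Cdiv (Cmult (RtoC (INR (Factorial.fact N))) (Cpowc (RtoC (INR N)) s))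
                          (Cprod (fun k => Cplus s (RtoC (INR k))) (S N))).

(** Extended Riemann-Liouville fractional derivative (Re nu < 0):
    D_z^nu {f; p} = 1/Gamma(-nu) int_0^z f(t) (z-t)^(-nu-1) exp(-p z^2/(t(z-t))) dt,
    the integral being taken along the segment t = z u, u in [0,1]. *)
Definition fracD (nu : C) (f : C -> C) (p z : C) : C :=
  Cmult (Cinv (CGamma (Copp nu)))
    (CRInt (fun u =>
       let t := Cmult z (RtoC u) in
       Cmult (Cmult (Cmult (f t) (Cpowc (Cminus z t) (Cminus (Copp nu) (RtoC 1))))
                    (Cexp (Copp (Cdiv (Cmult p (Cmult z z)) (Cmult t (Cminus z t))))))
             z) 0 1).

Definition Beta_p (a b p : C) : C :=
  CRInt (fun t =>
    Cmult (Cmult (Cpowc (RtoC t) (Cminus a (RtoC 1)))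
                 (Cpowc (RtoC (1 - t)) (Cminus b (RtoC 1))))
          (Cexp (Copp (Cdiv p (RtoC (t * (1 - t))))))) 0 1.

Definition FWcoef (m n : nat) (alpha : nat -> C) (A : nat -> R)
    (beta : nat -> C) (B : nat -> R) (k : nat) : C :=
  Cdiv (Cprod (fun i => CGamma (Cplus (alpha i) (RtoC (A i * INR k)))) m)
       (Cprod (fun j => CGamma (Cplus (beta j) (RtoC (B j * INR k)))) n).

Definition FoxWright (m n : nat) (alpha : nat -> C) (A : nat -> R)
    (beta : nat -> C) (B : nat -> R) (z : C) : C :=
  Cseries (fun k => Cdiv (Cmult (FWcoef m n alpha A beta B k) (Cpow z k))
                         (RtoC (INR (Factorial.fact k)))).

(** Extended Wright function  m+1Psi_n+1[(alpha_i,A_i),(gam,1);(beta_j,B_j),(c,1) | (z;p)]. *)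
Definition ExtWright (m n : nat) (alpha : nat -> C) (A : nat -> R)
    (beta : nat -> C) (B : nat -> R) (gam c z p : C) : C :=
  Cmult (Cinv (CGamma (Cminus c gam)))
    (Cseries (fun k =>
       Cdiv (Cmult (Cmult (FWcoef m n alpha A beta B k)
                          (Beta_p (Cplus gam (RtoC (INR k))) (Cminus c gam) p))
                   (Cpow z k))
            (RtoC (INR (Factorial.fact k))))).

(* Main.v *)
Require Import Defs.
From Stdlib Require Import Reals Factorial Lra Lia.
From Coquelicot Require Import Coquelicot.
Open Scope R_scope.

Lemma Ceq (a b : C) : fst a = fst b -> snd a = snd b -> a = b.
Proof. destruct a, b; simpl; intros; subst; auto. Qed.

Lemma Cexp_add a b : Cexp (Cplus a b) = Cmult (Cexp a) (Cexp b).
Proof.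
  destruct a as [a1 a2], b as [b1 b2]. unfold Cexp; simpl.
  apply Ceq; simpl; rewrite exp_plus, ?cos_plus, ?sin_plus; ring.
Qed.

Lemma Cexp_R r : Cexp (RtoC r) = RtoC (exp r).
Proof. unfold Cexp; simpl. rewrite cos_0, sin_0. apply Ceq; simpl; ring. Qed.

Lemma Cmod_Cexp a : Cmod (Cexp a) = exp (fst a).
Proof.
  destruct a as [a1 a2]. unfold Cexp, Cmod; cbn [fst snd].
  replace ((exp a1 * cos a2) ^ 2 + (exp a1 * sin a2) ^ 2)
    with ((exp a1)² * ((sin a2)² + (cos a2)²)) by (unfold Rsqr; ring).
  rewrite sin2_cos2, Rmult_1_r. apply sqrt_Rsqr. left; apply exp_pos.
Qed.

Lemma Carg_R u : 0 < u -> Carg (RtoC u) = 0.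
Proof.
  intros H. unfold Carg; simpl. destruct (Rlt_dec 0 u); [|lra].
  unfold Rdiv. rewrite Rmult_0_l. apply atan_0.
Qed.

Lemma Cpowc_R u s : 0 < u -> Cpowc (RtoC u) s = Cexp (Cmult s (RtoC (ln u))).
Proof.
  intros H. unfold Cpowc. rewrite Cmod_R. destruct (Req_EM_T (Rabs u) 0) as [e|_].
  - rewrite Rabs_pos_eq in e; lra.
  - unfold Clog. rewrite Cmod_R, Rabs_pos_eq by lra. rewrite Carg_R by auto. reflexivity.
Qed.

Lemma Cpowc_0 s : Cpowc (RtoC 0) s = RtoC 0.
Proof.
  unfold Cpowc. rewrite Cmod_R, Rabs_R0. destruct (Req_EM_T 0 0); [auto|lra].
Qed.

Lemma Carg_scale x y u : 0 < u -> Carg (x * u, y * u) = Carg (x, y).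
Proof.
  intros Hu. unfold Carg; simpl.
  assert (E : y * u / (x * u) = y / x).
  { destruct (Req_dec x 0). subst. unfold Rdiv. rewrite Rmult_0_l, !Rinv_0. ring. field; lra. }
  rewrite E.
  repeat (destruct Rlt_dec); repeat (destruct Rle_dec); try reflexivity; try nra.
Qed.

Lemma Cpowc_add z a b : z <> RtoC 0 ->
  Cmult (Cpowc z a) (Cpowc z b) = Cpowc z (Cplus a b).
Proof.
  intros Hz. unfold Cpowc. destruct (Req_EM_T (Cmod z) 0) as [e|_].
  - apply Cmod_eq_0 in e. contradiction.
  - rewrite <- Cexp_add. f_equal. ring.
Qed.

Lemma Cpowc_scale z u s : z <> RtoC 0 -> 0 < u ->
  Cpowc (Cmult z (RtoC u)) s = Cmult (Cpowc z s) (Cpowc (RtoC u) s).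
Proof.
  intros Hz Hu. rewrite Cpowc_R by auto.
  assert (Hm : 0 < Cmod z) by (apply Cmod_gt_0; auto).
  unfold Cpowc. rewrite Cmod_mult, Cmod_R, Rabs_pos_eq by lra.
  destruct (Req_EM_T (Cmod z * u) 0) as [e|_]. { nra. }
  destruct (Req_EM_T (Cmod z) 0) as [e|_]. { lra. }
  rewrite <- Cexp_add. f_equal.
  unfold Clog. rewrite Cmod_mult, Cmod_R, Rabs_pos_eq by lra.
  destruct z as [x y].
  replace (Cmult (x, y) (RtoC u)) with (x * u, y * u) by (apply Ceq; simpl; ring).
  rewrite Carg_scale by auto. rewrite ln_mult by auto.
  apply Ceq; simpl; ring.
Qed.

Lemma Cpowc_1 z : z <> RtoC 0 -> Cpowc z (RtoC 1) = z.
Proof.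
  intros Hz. assert (Hm : 0 < Cmod z) by (apply Cmod_gt_0; auto).
  unfold Cpowc. destruct (Req_EM_T (Cmod z) 0) as [e|_]. { lra. }
  replace (Cmult (RtoC 1) (Clog z)) with (Clog z) by ring.
  unfold Cexp, Clog; simpl. rewrite exp_ln by auto.
  destruct z as [x y]. unfold Carg; simpl.
  assert (Hxy : ~ (x = 0 /\ y = 0)).
  { intros [-> ->]. apply Hz. reflexivity. }
  unfold Cmod in *; simpl in *.
  assert (Hs : forall x0 : R, x0 <> 0 -> sqrt (x0 * (x0 * 1) + y * (y * 1)) = Rabs x0 * sqrt (1 + (y / x0)²)).
  { intros x0 H0. rewrite <- sqrt_Rsqr_abs. rewrite <- sqrt_mult_alt by apply Rle_0_sqr.
    f_equal. unfold Rsqr. field. auto. }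
  assert (Hq : forall t, 0 < sqrt (1 + t²)).
  { intros t. apply sqrt_lt_R0. generalize (Rle_0_sqr t); lra. }
  destruct (Rlt_dec 0 x).
  - rewrite Hs by lra. rewrite cos_atan, sin_atan, Rabs_pos_eq by lra.
    specialize (Hq (y/x)). apply Ceq; simpl; field; repeat split; lra.
  - destruct (Rlt_dec x 0).
    + rewrite Hs by lra. rewrite Rabs_left by lra. specialize (Hq (y/x)).
      destruct (Rle_dec 0 y).
      * rewrite neg_cos, neg_sin, cos_atan, sin_atan. apply Ceq; simpl; field; repeat split; lra.
      * rewrite cos_minus, sin_minus, cos_PI, sin_PI, cos_atan, sin_atan.
        apply Ceq; simpl; field; repeat split; lra.
    + assert (x = 0) by lra. subst x.
      replace (0 * (0 * 1) + y * (y * 1)) with (y²) by (unfold Rsqr; ring).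
      rewrite sqrt_Rsqr_abs.
      destruct (Rlt_dec 0 y).
      * rewrite cos_PI2, sin_PI2, Rabs_pos_eq by lra. apply Ceq; simpl; ring.
      * destruct (Rlt_dec y 0). 2: { exfalso; apply Hxy; split; lra. }
        rewrite cos_neg, sin_neg, cos_PI2, sin_PI2, Rabs_left by lra. apply Ceq; simpl; ring.
Qed.

Definition gB (eta mu p : C) (k : nat) (t : R) : C :=
    Cmult (Cmult (Cpowc (RtoC t) (Cminus (Cplus eta (RtoC (INR k))) (RtoC 1)))
                 (Cpowc (RtoC (1 - t)) (Cminus (Cminus mu eta) (RtoC 1))))
          (Cexp (Copp (Cdiv p (RtoC (t * (1 - t)))))).

Lemma Beta_gB eta mu p k :
  Beta_p (Cplus eta (RtoC (INR k))) (Cminus mu eta) p = CRInt (gB eta mu p k) 0 1.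
Proof. reflexivity. Qed.

Definition Ek (eta mu p : C) (k : nat) (u : R) : C :=
  ((fst eta + INR k - 1) * ln u + (fst mu - fst eta - 1) * ln (1 - u) - fst p / (u * (1 - u)),
   snd eta * ln u + (snd mu - snd eta) * ln (1 - u) - snd p / (u * (1 - u))).

Lemma gB_rep eta mu p k u : 0 < u < 1 -> gB eta mu p k u = Cexp (Ek eta mu p k u).
Proof.
  intros Hu. unfold gB. rewrite !Cpowc_R by lra. rewrite <- !Cexp_add. f_equal.
  unfold Ek. assert (u * (1 - u) <> 0) by nra.
  destruct eta, mu, p. apply Ceq; simpl; field; nra.
Qed.

Lemma gB_0 eta mu p k : gB eta mu p k 0 = RtoC 0.
Proof. unfold gB. rewrite Cpowc_0. ring. Qed.

Lemma gB_1 eta mu p k : gB eta mu p k 1 = RtoC 0.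
Proof. unfold gB. replace (1 - 1) with 0 by ring. rewrite Cpowc_0. ring. Qed.

Lemma exp_bound (q r : R) : 0 < q -> 0 < r -> exp (- ln r - q / r) <= 4 * r / q ^ 2.
Proof.
  intros Hq Hr.
  unfold Rminus. rewrite exp_plus, exp_Ropp, exp_ln by auto.
  replace (- (q / r)) with (- (2 * (q / (2 * r)))) by (field; lra).
  rewrite exp_Ropp.
  assert (H1 : 1 + q / (2 * r) <= exp (q / (2 * r))).
  { left. apply exp_ineq1. assert (0 < q / (2 * r)) by (apply Rdiv_lt_0_compat; lra). lra. }
  replace (2 * (q / (2 * r))) with (q / (2 * r) + q / (2 * r)) by ring.
  rewrite exp_plus.
  assert (H2 : 0 < q / (2 * r)) by (apply Rdiv_lt_0_compat; lra).
  set (e := exp (q / (2 * r))) in *.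
  assert (He : q / (2 * r) < e) by lra.
  assert (Hinv : / (e * e) <= / ((q / (2 * r)) * (q / (2 * r)))).
  { apply Rinv_le_contravar. nra. nra. }
  replace (4 * r / q ^ 2) with (/ r * / ((q / (2 * r)) * (q / (2 * r)))) by (field; lra).
  apply Rmult_le_compat_l. left; apply Rinv_0_lt_compat; lra. auto.
Qed.

Definition clamp (u : R) : R := Rmax 0 (Rmin 1 u).

Lemma clamp_id u : 0 <= u <= 1 -> clamp u = u.
Proof. intros. unfold clamp. rewrite Rmin_right by lra. rewrite Rmax_right; lra. Qed.
Lemma clamp_in u : 0 <= clamp u <= 1.
Proof. unfold clamp. unfold Rmax, Rmin. repeat destruct Rle_dec; lra. Qed.
Lemma clamp_le0 u : u <= 0 -> clamp u = 0.
Proof. unfold clamp. unfold Rmax, Rmin. repeat destruct Rle_dec; lra. Qed.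
Lemma clamp_ge1 u : 1 <= u -> clamp u = 1.
Proof. unfold clamp. unfold Rmax, Rmin. repeat destruct Rle_dec; lra. Qed.

Lemma ball_R (x y : R) (eps : R) : ball x eps y <-> Rabs (y - x) < eps.
Proof. unfold ball; simpl; unfold AbsRing_ball, abs, minus, plus, opp; simpl. tauto. Qed.

Lemma cont_zero (H : R -> R) (C x : R) : 0 <= C ->
  (forall y, Rabs (H y) <= C * Rabs (y - x)) -> continuous H x.
Proof.
  intros HC Hb. apply continuity_pt_filterlim.
  assert (H0 : H x = 0).
  { specialize (Hb x). rewrite Rminus_diag, Rabs_R0, Rmult_0_r in Hb.
    generalize (Rabs_pos (H x)); intros. apply Rabs_eq_0. lra. }
  intros eps Heps. exists (eps / (C + 1)). split.
  { apply Rdiv_lt_0_compat; lra. }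
  intros y [_ Hy]. simpl in *. unfold R_dist in *. rewrite H0, Rminus_0_r.
  eapply Rle_lt_trans. apply Hb.
  apply Rle_lt_trans with ((C + 1) * Rabs (y - x)).
  { generalize (Rabs_pos (y - x)); nra. }
  apply Rmult_lt_reg_l with (/ (C + 1)). apply Rinv_0_lt_compat; lra.
  rewrite <- Rmult_assoc, Rinv_l, Rmult_1_l by lra. unfold Rdiv in Hy. lra.
Qed.

Lemma int_of_cont (F : R -> R) (C : R) : 0 <= C -> F 0 = 0 -> F 1 = 0 ->
  (forall u, 0 < u < 1 -> Rabs (F u) <= C * (u * (1 - u))) ->
  (forall v, 0 < v < 1 -> continuous F v) -> ex_RInt F 0 1.
Proof.
  intros HC H0 H1 Hb Hc.
  apply (@ex_RInt_ext R_NormedModule) with (fun y => F (clamp y)).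
  { intros x Hx. rewrite Rmin_left, Rmax_right in Hx by lra. rewrite clamp_id; lra. }
  apply (@ex_RInt_continuous R_CompleteNormedModule).
  intros z Hz. rewrite Rmin_left, Rmax_right in Hz by lra.
  assert (Hend : forall x, (x = 0 \/ x = 1) -> continuous (fun y => F (clamp y)) x).
  { intros x Hx. apply cont_zero with C; auto. intros y.
    destruct (Rle_dec y 0). { rewrite clamp_le0, H0, Rabs_R0 by auto. apply Rmult_le_pos; auto; apply Rabs_pos. }
    destruct (Rle_dec 1 y). { rewrite clamp_ge1, H1, Rabs_R0 by auto. apply Rmult_le_pos; auto; apply Rabs_pos. }
    rewrite clamp_id by lra. eapply Rle_trans. apply Hb; lra.
    apply Rmult_le_compat_l; auto.
    destruct Hx; subst x. rewrite Rminus_0_r, Rabs_pos_eq by lra. nra.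
    rewrite Rabs_left by lra. nra. }
  destruct (Req_dec z 0). apply Hend; auto.
  destruct (Req_dec z 1). apply Hend; auto.
  apply continuous_ext_loc with F.
  2: apply Hc; lra.
  assert (Hd : 0 < Rmin z (1 - z)) by (apply Rmin_pos; lra).
  exists (mkposreal _ Hd). intros y Hy. apply ball_R in Hy. assert (Hy' : Rabs (y - z) < Rmin z (1 - z)) by exact Hy. clear Hy. rename Hy' into Hy.
  assert (Hm1 := Rmin_l z (1 - z)). assert (Hm2 := Rmin_r z (1 - z)).
  apply Rabs_lt_between in Hy.
  rewrite clamp_id; auto. lra.
Qed.

Lemma exp_mono x y : x <= y -> exp x <= exp y.
Proof. intros H. destruct (Rle_lt_or_eq_dec _ _ H). left; apply exp_increasing; auto. subst; lra. Qed.


Lemma gB_bound_int (eta mu p : C) (Hp : 0 < fst p) (Heta : 0 < fst eta) (Hmu : fst eta < fst mu) k u : 0 < u < 1 -> Cmod (gB eta mu p k u) <= 4 * (u * (1 - u)) / fst p ^ 2.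
Proof.
  intros Hu. rewrite gB_rep by auto. rewrite Cmod_Cexp. unfold Ek; simpl fst.
  eapply Rle_trans. 2: apply exp_bound; nra.
  apply exp_mono.
  rewrite ln_mult by lra.
  assert (H1 : ln u < 0) by (rewrite <- ln_1; apply ln_increasing; lra).
  assert (H2 : ln (1 - u) < 0) by (rewrite <- ln_1; apply ln_increasing; lra).
  assert (H3 : 0 <= INR k) by apply pos_INR.
  nra.
Qed.

Lemma gB_bound (eta mu p : C) (Hp : 0 < fst p) (Heta : 0 < fst eta) (Hmu : fst eta < fst mu) k u : 0 <= u <= 1 -> Cmod (gB eta mu p k u) <= 4 / fst p ^ 2.
Proof.
  intros Hu. destruct (Req_dec u 0). subst. rewrite gB_0, Cmod_0.
  apply Rmult_le_pos. lra. left. apply Rinv_0_lt_compat. apply pow_lt. auto.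
  destruct (Req_dec u 1). subst. rewrite gB_1, Cmod_0.
  apply Rmult_le_pos. lra. left. apply Rinv_0_lt_compat. apply pow_lt. auto.
  eapply Rle_trans. apply (gB_bound_int eta mu p Hp Heta Hmu); lra.
  unfold Rdiv. apply Rmult_le_compat_r. left. apply Rinv_0_lt_compat. apply pow_lt. auto.
  nra.
Qed.

Lemma gB_int (eta mu p : C) (Hp : 0 < fst p) (Heta : 0 < fst eta) (Hmu : fst eta < fst mu) k : ex_RInt (fun u => fst (gB eta mu p k u)) 0 1 /\ ex_RInt (fun u => snd (gB eta mu p k u)) 0 1.
Proof.
  assert (HC : 0 <= 4 / fst p ^ 2).
  { apply Rmult_le_pos. lra. left. apply Rinv_0_lt_compat. apply pow_lt. auto. }
  assert (Hb : forall u, 0 < u < 1 -> Cmod (gB eta mu p k u) <= 4 / fst p ^ 2 * (u * (1 - u))).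
  { intros u Hu. eapply Rle_trans. apply (gB_bound_int eta mu p Hp Heta Hmu); auto. right; unfold Rdiv; ring. }
  assert (Hloc : forall v, 0 < v < 1 -> locally v (fun y => Cexp (Ek eta mu p k y) = gB eta mu p k y)).
  { intros v Hv. assert (Hd : 0 < Rmin v (1 - v)) by (apply Rmin_pos; lra).
    exists (mkposreal _ Hd). intros y Hy. apply ball_R in Hy. assert (Hy' : Rabs (y - v) < Rmin v (1 - v)) by exact Hy. clear Hy. rename Hy' into Hy.
    assert (Hm1 := Rmin_l v (1 - v)). assert (Hm2 := Rmin_r v (1 - v)).
    apply Rabs_lt_between in Hy. rewrite gB_rep; auto. lra. }
  split.
  - apply int_of_cont with (4 / fst p ^ 2); auto.
    rewrite gB_0; reflexivity. rewrite gB_1; reflexivity.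
    intros u Hu. eapply Rle_trans. 2: apply Hb; auto.
    destruct (gB eta mu p k u) as [c1 c2]. generalize (Rmax_Cmod (c1, c2)). simpl.
    generalize (Rmax_l (Rabs c1) (Rabs c2)). lra.
    intros v Hv. apply continuous_ext_loc with (fun y => fst (Cexp (Ek eta mu p k y))).
    { destruct (Hloc v Hv) as [e He]. exists e. intros y Hy. rewrite He; auto. }
    apply (@ex_derive_continuous R_AbsRing R_NormedModule). unfold Cexp, Ek; simpl. auto_derive. repeat split; nra.
  - apply int_of_cont with (4 / fst p ^ 2); auto.
    rewrite gB_0; reflexivity. rewrite gB_1; reflexivity.
    intros u Hu. eapply Rle_trans. 2: apply Hb; auto.
    destruct (gB eta mu p k u) as [c1 c2]. generalize (Rmax_Cmod (c1, c2)). simpl.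
    generalize (Rmax_r (Rabs c1) (Rabs c2)). lra.
    intros v Hv. apply continuous_ext_loc with (fun y => snd (Cexp (Ek eta mu p k y))).
    { destruct (Hloc v Hv) as [e He]. exists e. intros y Hy. rewrite He; auto. }
    apply (@ex_derive_continuous R_AbsRing R_NormedModule). unfold Cexp, Ek; simpl. auto_derive. repeat split; nra.
Qed.



Lemma tail_bound (d M : nat -> R) N :
  (forall k, Rabs (d k) <= M k) -> ex_series M ->
  Rabs (Series d - sum_n d N) <= Series M - sum_n M N.
Proof.
  intros Hd HM.
  assert (HdA : ex_series (fun k => Rabs (d k))).
  { apply (@ex_series_le R_AbsRing R_CompleteNormedModule _ M); auto. intros k. unfold norm; simpl. unfold abs; simpl. rewrite Rabs_Rabsolu. auto. }
  assert (Hd' : ex_series d) by (apply ex_series_Rabs; auto).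
  rewrite (Series_incr_n d (S N)) by (auto; lia).
  rewrite (Series_incr_n M (S N)) by (auto; lia).
  simpl pred. rewrite !sum_n_Reals.
  replace (sum_f_R0 d N + Series (fun k => d (S N + k)%nat) - sum_f_R0 d N)
    with (Series (fun k => d (S N + k)%nat)) by ring.
  replace (sum_f_R0 M N + Series (fun k => M (S N + k)%nat) - sum_f_R0 M N)
    with (Series (fun k => M (S N + k)%nat)) by ring.
  eapply Rle_trans. apply Series_Rabs.
  apply (ex_series_incr_n (fun k => Rabs (d k)) (S N)). auto.
  apply Series_le. intros n; split. apply Rabs_pos. apply Hd.
  apply (ex_series_incr_n M (S N)). auto.
Qed.

Lemma aux_abs (a b : R) : b - a <= Rabs (a + - b).
Proof. rewrite <- Rabs_Ropp. eapply Rle_trans. 2: apply Rle_abs. lra. Qed.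

Lemma RKey (phi : nat -> R -> R) (M : nat -> R) :
  (forall k, ex_RInt (phi k) 0 1) ->
  (forall k u, 0 <= u <= 1 -> Rabs (phi k u) <= M k) ->
  ex_series M ->
  is_RInt (fun u => Series (fun k => phi k u)) 0 1
          (Series (fun k => RInt (phi k) 0 1)).
Proof.
  intros Hint Hb HM.
  set (psi := fun k u => phi k (clamp u)).
  assert (Hpsi : forall k u, Rabs (psi k u) <= M k).
  { intros. apply Hb. apply clamp_in. }
  assert (Hext : forall k x, Rmin 0 1 < x < Rmax 0 1 -> phi k x = psi k x).
  { intros k x Hx. rewrite Rmin_left, Rmax_right in Hx by lra. unfold psi. rewrite clamp_id; lra. }
  assert (HI : forall k, is_RInt (psi k) 0 1 (RInt (phi k) 0 1)).
  { intros k. apply is_RInt_ext with (phi k). apply Hext. apply (@RInt_correct R_CompleteNormedModule). auto. }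
  assert (HRI : ex_series (fun k => RInt (phi k) 0 1)).
  { apply (@ex_series_le R_AbsRing R_CompleteNormedModule _ M); auto. intros k. unfold norm; simpl. unfold abs; simpl.
    replace (M k) with ((1 - 0) * M k) by ring.
    apply abs_RInt_le_const. lra. auto. intros; apply Hb; lra. }
  destruct (filterlim_RInt (fun N u => sum_n (fun k => psi k u) N) 0 1 eventually
     _ (fun u => Series (fun k => psi k u)) (fun N => sum_n (fun k => RInt (phi k) 0 1) N))
    as [If [H1 H2]].
  - intros N. induction N.
    + rewrite sum_O. apply is_RInt_ext with (psi 0%nat). intros. rewrite sum_O. auto. auto.
    + rewrite sum_Sn. apply is_RInt_ext with (fun u => plus (sum_n (fun k => psi k u) N) (psi (S N) u)).
      intros. rewrite sum_Sn. auto.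
      apply (@is_RInt_plus R_NormedModule); auto.
  - apply filterlim_locally. intros eps.
    assert (HMc := Series_correct _ HM).
    unfold is_series in HMc. destruct (proj1 (filterlim_locally _ _) HMc eps) as [N0 HN0].
    exists N0. intros N HN.
    intros u. specialize (HN0 N HN).
    unfold ball in *; simpl in *. unfold AbsRing_ball in *. unfold minus, plus, opp, abs in *; simpl in *.
    eapply Rle_lt_trans. 2: apply HN0.
    replace (sum_n (fun k : nat => psi k u) N + - Series (fun k : nat => psi k u)) with (-(Series (fun k : nat => psi k u) - sum_n (fun k : nat => psi k u) N)) by ring.
    rewrite Rabs_Ropp.
    eapply Rle_trans. apply (tail_bound (fun k => psi k u) M N); auto.
    change (@sum_n (NormedModule.AbelianMonoid R_AbsRing R_NormedModule) M N) with (@sum_n R_AbelianMonoid M N). apply aux_abs.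
  - assert (If = Series (fun k => RInt (phi k) 0 1)).
    { assert (H3 := Series_correct _ HRI). unfold is_series in H3.
      apply (@filterlim_locally_unique nat R_AbsRing R_NormedModule eventually _ (fun N => sum_n (fun k => RInt (phi k) 0 1) N)). exact H1.
      exact H3. }
    subst If. apply (@is_RInt_ext R_NormedModule) with (2 := H2).
    intros x Hx. rewrite Rmin_left, Rmax_right in Hx by lra.
    apply Series_ext. intros k. unfold psi. rewrite clamp_id; lra.
Qed.


Lemma exR_le (a b : nat -> R) : (forall n, Rabs (a n) <= b n) -> ex_series b -> ex_series a.
Proof. intros. apply (@ex_series_le R_AbsRing R_CompleteNormedModule a b); auto. Qed.

Lemma exR_scal (c : R) (a : nat -> R) : ex_series a -> ex_series (fun n => c * a n).
Proof. intros H. apply (@ex_series_scal_l R_AbsRing R_NormedModule c a H). Qed.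

Lemma fst_le_Cmod (x : C) : Rabs (fst x) <= Cmod x.
Proof. generalize (Rmax_Cmod x) (Rmax_l (Rabs (fst x)) (Rabs (snd x))). lra. Qed.
Lemma snd_le_Cmod (x : C) : Rabs (snd x) <= Cmod x.
Proof. generalize (Rmax_Cmod x) (Rmax_r (Rabs (fst x)) (Rabs (snd x))). lra. Qed.

Lemma CKey (Phi : nat -> R -> C) (M : nat -> R) :
  (forall k, ex_RInt (fun u => fst (Phi k u)) 0 1 /\ ex_RInt (fun u => snd (Phi k u)) 0 1) ->
  (forall k u, 0 <= u <= 1 -> Cmod (Phi k u) <= M k) -> ex_series M ->
  CRInt (fun u => Cseries (fun k => Phi k u)) 0 1 = Cseries (fun k => CRInt (Phi k) 0 1).
Proof.
  intros Hi Hb HM. unfold CRInt, Cseries. apply Ceq; simpl.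
  - apply (@is_RInt_unique R_CompleteNormedModule).
    apply (RKey (fun k u => fst (Phi k u)) M); auto. apply Hi.
    intros k u Hu. eapply Rle_trans. apply fst_le_Cmod. auto.
  - apply (@is_RInt_unique R_CompleteNormedModule).
    apply (RKey (fun k u => snd (Phi k u)) M); auto. apply Hi.
    intros k u Hu. eapply Rle_trans. apply snd_le_Cmod. auto.
Qed.

Lemma Cseries_scal (c : C) (a : nat -> C) : ex_series (fun k => Cmod (a k)) ->
  Cseries (fun k => Cmult c (a k)) = Cmult c (Cseries a).
Proof.
  intros H.
  assert (H1 : ex_series (fun k => fst (a k))) by (apply (exR_le _ _ (fun k => fst_le_Cmod (a k))); auto).
  assert (H2 : ex_series (fun k => snd (a k))) by (apply (exR_le _ _ (fun k => snd_le_Cmod (a k))); auto).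
  destruct c as [c1 c2]. unfold Cseries. apply Ceq; simpl.
  - rewrite Series_minus by (apply exR_scal; auto). rewrite !Series_scal_l. reflexivity.
  - rewrite Series_plus by (apply exR_scal; auto). rewrite !Series_scal_l. reflexivity.
Qed.

Lemma Cseries_ext (a b : nat -> C) : (forall k, a k = b k) -> Cseries a = Cseries b.
Proof. intros H. unfold Cseries. f_equal; apply Series_ext; intros; rewrite H; auto. Qed.

Lemma CRInt_ext (f g : R -> C) : (forall u, 0 < u < 1 -> f u = g u) -> CRInt f 0 1 = CRInt g 0 1.
Proof.
  intros H. unfold CRInt. f_equal; apply (@RInt_ext R_CompleteNormedModule);
  intros x Hx; rewrite Rmin_left, Rmax_right in Hx by lra; rewrite H; auto.
Qed.

Lemma scal_int (K : C) (g : R -> C) :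
  ex_RInt (fun u => fst (g u)) 0 1 -> ex_RInt (fun u => snd (g u)) 0 1 ->
  (ex_RInt (fun u => fst (Cmult K (g u))) 0 1 /\ ex_RInt (fun u => snd (Cmult K (g u))) 0 1) /\
  CRInt (fun u => Cmult K (g u)) 0 1 = Cmult K (CRInt g 0 1).
Proof.
  intros H1 H2. destruct K as [K1 K2].
  assert (E1 := RInt_correct _ _ _ H1). assert (E2 := RInt_correct _ _ _ H2).
  assert (I1 : is_RInt (fun u => fst (Cmult (K1, K2) (g u))) 0 1
      (K1 * RInt (fun u => fst (g u)) 0 1 - K2 * RInt (fun u => snd (g u)) 0 1)).
  { apply (@is_RInt_ext R_NormedModule) with (fun u => minus (scal K1 (fst (g u))) (scal K2 (snd (g u)))).
    intros; simpl. unfold minus, plus, opp, scal; simpl. unfold mult; simpl. ring.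
    apply (@is_RInt_minus R_NormedModule); apply (@is_RInt_scal R_NormedModule); auto. }
  assert (I2 : is_RInt (fun u => snd (Cmult (K1, K2) (g u))) 0 1
      (K1 * RInt (fun u => snd (g u)) 0 1 + K2 * RInt (fun u => fst (g u)) 0 1)).
  { apply (@is_RInt_ext R_NormedModule) with (fun u => plus (scal K1 (snd (g u))) (scal K2 (fst (g u)))).
    intros; simpl. unfold minus, plus, opp, scal; simpl. unfold mult; simpl. ring.
    apply (@is_RInt_plus R_NormedModule); apply (@is_RInt_scal R_NormedModule); auto. }
  split. split; eexists; eauto.
  unfold CRInt. apply Ceq; simpl.
  - apply (@is_RInt_unique R_CompleteNormedModule); exact I1.
  - apply (@is_RInt_unique R_CompleteNormedModule); exact I2.
Qed.

Lemma RtoC_neq (x : R) : x <> 0 -> RtoC x <> RtoC 0.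
Proof. intros H E. apply H. injection E. auto. Qed.

Lemma Cmod_term (a b : C) k :
  Cmod (Cdiv (Cmult a (Cpow b k)) (RtoC (INR (fact k)))) = Cmod a * Cmod b ^ k / INR (fact k).
Proof.
  rewrite Cmod_div, Cmod_mult, Cmod_pow, Cmod_R, Rabs_pos_eq. reflexivity.
  left; apply INR_fact_lt_0. apply RtoC_neq, INR_fact_neq_0.
Qed.

Lemma Cpowc_shift u s k : 0 < u ->
  Cpowc (RtoC u) (Cminus (Cplus s (RtoC (INR k))) (RtoC 1)) =
  Cmult (Cpowc (RtoC u) (Cminus s (RtoC 1))) (Cpow (RtoC u) k).
Proof.
  intros Hu. rewrite !Cpowc_R by auto.
  replace (Cmult (Cminus (Cplus s (RtoC (INR k))) (RtoC 1)) (RtoC (ln u)))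
    with (Cplus (Cmult (Cminus s (RtoC 1)) (RtoC (ln u))) (RtoC (INR k * ln u))).
  2: { rewrite RtoC_mult. ring. }
  rewrite Cexp_add, Cexp_R. f_equal.
  rewrite <- RtoC_pow. f_equal. rewrite <- Rpower_pow by auto. reflexivity.
Qed.


Theorem mainTheorem15 (m n : nat) (alpha : nat -> C) (A : nat -> R)
    (beta : nat -> C) (B : nat -> R) (eta mu p z : C)
    (HA : forall i, (i < m)%nat -> 0 < A i)
    (HB : forall j, (j < n)%nat -> 0 < B j)
    (Hp : 0 < fst p) (Heta : 0 < fst eta) (Hmu : fst eta < fst mu)
    (Hz : z <> RtoC 0)
    (Hconv : ex_series (fun k =>
        Cmod (FWcoef m n alpha A beta B k) * Cmod z ^ k / INR (Factorial.fact k))) :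
  fracD (Cminus eta mu)
        (fun t => Cmult (Cpowc t (Cminus eta (RtoC 1))) (FoxWright m n alpha A beta B t))
        p z
  = Cmult (Cpowc z (Cminus mu (RtoC 1))) (ExtWright m n alpha A beta B eta mu z p).
Proof.
  set (c := FWcoef m n alpha A beta B) in *.
  set (w := Cpowc z (Cminus mu (RtoC 1))).
  set (Kk := fun k => Cmult w (Cdiv (Cmult (c k) (Cpow z k)) (RtoC (INR (fact k))))).
  set (Phi := fun k u => Cmult (Kk k) (gB eta mu p k u)).
  set (M0 := 4 / fst p ^ 2).
  assert (HM0 : 0 <= M0).
  { apply Rmult_le_pos. lra. left. apply Rinv_0_lt_compat. apply pow_lt. auto. }
  set (Mk := fun k => (Cmod w * M0) * (Cmod (c k) * Cmod z ^ k / INR (fact k))).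
  assert (HMk : ex_series Mk) by (apply exR_scal; auto).
  assert (Hfact : forall k, RtoC (INR (fact k)) <> RtoC 0) by (intros; apply RtoC_neq, INR_fact_neq_0).
  assert (Hgi := gB_int eta mu p Hp Heta Hmu).
  assert (Hgb := gB_bound eta mu p Hp Heta Hmu).
  assert (HPhi : forall k, (ex_RInt (fun u => fst (Phi k u)) 0 1 /\ ex_RInt (fun u => snd (Phi k u)) 0 1) /\
                    CRInt (Phi k) 0 1 = Cmult (Kk k) (CRInt (gB eta mu p k) 0 1)).
  { intros k. destruct (Hgi k) as [G1 G2]. exact (scal_int (Kk k) (gB eta mu p k) G1 G2). }
  assert (HPb : forall k u, 0 <= u <= 1 -> Cmod (Phi k u) <= Mk k).
  { intros k u Hu. unfold Phi, Mk, Kk. rewrite !Cmod_mult, Cmod_term.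
    specialize (Hgb k u Hu). fold M0 in Hgb.
    assert (0 <= Cmod (c k) * Cmod z ^ k / INR (fact k)).
    { rewrite <- Cmod_term. apply Cmod_ge_0. }
    generalize (Cmod_ge_0 w). intros. 
    replace (Cmod w * M0 * (Cmod (c k) * Cmod z ^ k / INR (fact k))) with
      (Cmod w * (Cmod (c k) * Cmod z ^ k / INR (fact k)) * M0) by ring.
    apply Rmult_le_compat_l; auto. apply Rmult_le_pos; auto. }
  assert (Hint : CRInt (fun u => Cseries (fun k => Phi k u)) 0 1 = Cseries (fun k => CRInt (Phi k) 0 1)).
  { apply CKey with Mk; auto. intros k; apply HPhi. }
  set (x := fun k => Cdiv (Cmult (Cmult (c k) (Beta_p (Cplus eta (RtoC (INR k))) (Cminus mu eta) p)) (Cpow z k)) (RtoC (INR (fact k)))).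
  assert (Hterm : forall k, CRInt (Phi k) 0 1 = Cmult w (x k)).
  { intros k. rewrite (proj2 (HPhi k)). unfold x. rewrite Beta_gB. unfold Kk. field. apply Hfact. }
  assert (HBk : forall k, Cmod (CRInt (gB eta mu p k) 0 1) <= sqrt 2 * M0).
  { intros k. eapply Rle_trans. apply Cmod_2Rmax. apply Rmult_le_compat_l. apply sqrt_pos.
    destruct (Hgi k) as [G1 G2].
    apply Rmax_lub; unfold CRInt; cbn [fst snd]; replace M0 with ((1 - 0) * M0) by ring;
      apply abs_RInt_le_const; auto; try lra; intros t Ht.
    eapply Rle_trans. apply fst_le_Cmod. apply Hgb; lra.
    eapply Rle_trans. apply snd_le_Cmod. apply Hgb; lra. }
  assert (Hxs : ex_series (fun k => Cmod (x k))).
  { apply exR_le with (fun k => (sqrt 2 * M0) * (Cmod (c k) * Cmod z ^ k / INR (fact k))).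
    2: apply exR_scal; auto.
    intros k. rewrite Rabs_pos_eq by apply Cmod_ge_0. unfold x.
    rewrite Cmod_div, !Cmod_mult, Cmod_pow, Cmod_R, Rabs_pos_eq by (auto; left; apply INR_fact_lt_0).
    rewrite Beta_gB. specialize (HBk k).
    assert (H0 := INR_fact_lt_0 k). generalize (Cmod_ge_0 (c k)) (pow_le _ k (Cmod_ge_0 z)). intros.
    unfold Rdiv. rewrite <- Rmult_assoc.
    apply Rmult_le_compat_r. left; apply Rinv_0_lt_compat; auto.
    replace (sqrt 2 * M0 * (Cmod (c k) * Cmod z ^ k)) with (Cmod (c k) * (sqrt 2 * M0) * Cmod z ^ k) by ring.
    apply Rmult_le_compat_r; auto. apply Rmult_le_compat_l; auto. }
  assert (Hnu : Copp (Cminus eta mu) = Cminus mu eta) by (apply Ceq; simpl; ring).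
  unfold fracD, ExtWright. rewrite Hnu.
  rewrite (CRInt_ext _ (fun u => Cseries (fun k => Phi k u))).
  - rewrite Hint. rewrite (Cseries_ext _ (fun k => Cmult w (x k))) by apply Hterm.
    rewrite Cseries_scal by auto. unfold x, w. change (FWcoef m n alpha A beta B) with c. ring.
  - intros u Hu. cbv beta. unfold FoxWright. change (FWcoef m n alpha A beta B) with c.
    set (t := Cmult z (RtoC u)).
    match goal with |- Cmult (Cmult (Cmult (Cmult ?P (Cseries ?y)) ?R1) ?R2) ?R3 = _ =>
      transitivity (Cseries (fun k => Cmult (Cmult (Cmult (Cmult P R1) R2) R3) (y k)));
      [ rewrite Cseries_scal; [ring|] | ] end.
    { apply exR_le with (fun k => Cmod (c k) * Cmod z ^ k / INR (fact k)); auto.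
      intros k. rewrite Rabs_pos_eq by apply Cmod_ge_0. rewrite !Cmod_term.
      unfold Rdiv. apply Rmult_le_compat_r. left; apply Rinv_0_lt_compat, INR_fact_lt_0.
      apply Rmult_le_compat_l. apply Cmod_ge_0. apply pow_incr. split. apply Cmod_ge_0.
      unfold t. rewrite Cmod_mult, Cmod_R, Rabs_pos_eq by lra. generalize (Cmod_ge_0 z). nra. }
    apply Cseries_ext. intros k.
    assert (Hu0 : RtoC u <> RtoC 0) by (apply RtoC_neq; lra).
    assert (Hu1 : Cminus (RtoC 1) (RtoC u) <> RtoC 0) by (rewrite <- RtoC_minus; apply RtoC_neq; lra).
    assert (Hzt : Cminus z t = Cmult z (RtoC (1 - u))) by (unfold t; rewrite RtoC_minus; ring).
    assert (Hex : Cdiv (Cmult p (Cmult z z)) (Cmult t (Cminus z t)) = Cdiv p (RtoC (u * (1 - u)))).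
    { rewrite Hzt. unfold t. rewrite RtoC_mult, RtoC_minus. field. repeat split; auto. }
    assert (Hw : w = Cmult (Cmult (Cpowc z (Cminus eta (RtoC 1))) (Cpowc z (Cminus (Cminus mu eta) (RtoC 1)))) z).
    { transitivity (Cmult (Cmult (Cpowc z (Cminus eta (RtoC 1))) (Cpowc z (Cminus (Cminus mu eta) (RtoC 1)))) (Cpowc z (RtoC 1))).
      rewrite !Cpowc_add by auto. unfold w. f_equal. ring.
      rewrite Cpowc_1 by auto. reflexivity. }
    rewrite Hex, Hzt. unfold Phi, Kk, gB, t. rewrite Hw.
    rewrite Cpowc_shift by lra. rewrite !Cpowc_scale by (auto; lra).
    rewrite Cpow_mult_l. field. apply Hfact.
Qed.
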